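(* Let $E$ be a Dedekind complete Riesz space with conditional expectation operator $T$ and let $e$ be a weak order unit of $E$ with $Te=e$. If $(f_\alpha)_{\alpha\in\Lambda}$ is a $T$-uniform family in $E$, then the set $\{T|f_\alpha| : \alpha\in\Lambda\}$ is order bounded in $E$.
   Context: A conditional expectation operator on a Dedekind complete Riesz space $E$ with a weak order unit is a positive, order continuous linear projection $T:E\to E$ which maps weak order units to weak order units and whose range $\mathcal{R}(T)$ is a Dedekind complete Riesz subspace of $E$. For $u\in E$, $P_u$ denotes the band projection onto the band generated by $u$. A family $(f_\alpha)_{\alpha\in\Lambda}$ in $E$ is called $T$-uniform if $\sup\{T P_{(|f_\alpha|-ce)^+}|f_\alpha| : \alpha\in\Lambda\}$ (exists for all sufficiently large $c$ and) order converges to $0$ as $c\to\infty$. *)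

(* Defs.v *)
From HB Require Import structures.
From mathcomp Require Import all_boot all_order all_algebra.
From mathcomp Require Import reals.
From Stdlib Require Import ClassicalEpsilon.
Set Implicit Arguments. Unset Strict Implicit. Unset Printing Implicit Defensive.
Import Order.TTheory GRing.Theory Num.Theory.
Local Open Scope ring_scope.

Section Riesz.
Variables (R : realType) (E : lmodType R) (le : E -> E -> Prop).

Definition is_ub (A : E -> Prop) (u : E) := forall x, A x -> le x u.
Definition is_lb (A : E -> Prop) (u : E) := forall x, A x -> le u x.
Definition is_lub (A : E -> Prop) (s : E) :=
  is_ub A s /\ forall u, is_ub A u -> le s u.
Definition is_glb (A : E -> Prop) (s : E) :=
  is_lb A s /\ forall u, is_lb A u -> le u s.

Record riesz_space : Prop := {
  rs_refl : forall x, le x x;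
  rs_anti : forall x y, le x y -> le y x -> x = y;
  rs_trans : forall x y z, le x y -> le y z -> le x z;
  rs_add : forall x y z, le x y -> le (x + z) (y + z);
  rs_scale : forall (a : R) x y, 0 <= a -> le x y -> le (a *: x) (a *: y);
  rs_sup2 : forall x y, exists s, is_lub (fun z => z = x \/ z = y) s
}.

Definition dedekind_complete : Prop :=
  forall A : E -> Prop, (exists x, A x) -> (exists u, is_ub A u) ->
  exists s, is_lub A s.

(* chosen supremum / infimum (meaningful when they exist) *)
Definition lsup (A : E -> Prop) : E := epsilon (inhabits 0) (is_lub A).
Definition linf (A : E -> Prop) : E := epsilon (inhabits 0) (is_glb A).

Definition rmax (x y : E) : E := lsup (fun z => z = x \/ z = y).
Definition rmin (x y : E) : E := linf (fun z => z = x \/ z = y).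
Definition rabs (x : E) : E := rmax x (- x).
Definition rpos (x : E) : E := rmax x 0.

Definition disjoint (x y : E) : Prop := rmin (rabs x) (rabs y) = 0.

Definition disj_comp (u : E) (x : E) : Prop := disjoint x u.
Definition band_gen (u : E) (x : E) : Prop :=
  forall y, disj_comp u y -> disjoint x y.

(* P_u : band projection onto the band generated by u
   (E = {u}^dd (+) {u}^d in a Dedekind complete Riesz space) *)
Definition band_proj (u x : E) : E :=
  epsilon (inhabits 0) (fun p => band_gen u p /\ disj_comp u (x - p)).

Definition weak_order_unit (w : E) : Prop :=
  le 0 w /\ forall x, band_gen w x.

Definition directed (I : Type) (r : I -> I -> Prop) : Prop :=
  inhabited I /\ (forall i, r i i) /\ (forall i j k, r i j -> r j k -> r i k) /\
  (forall i j, exists k, r i k /\ r j k).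

Definition oconv (I : Type) (r : I -> I -> Prop) (x : I -> E) (l : E) : Prop :=
  exists p : I -> E,
    (forall i j, r i j -> le (p j) (p i)) /\
    is_glb (fun z => exists i, z = p i) 0 /\
    exists i0, forall i, r i0 i -> le (rabs (x i - l)) (p i).

Definition order_continuous (T : E -> E) : Prop :=
  forall (I : Type) (r : I -> I -> Prop), directed r ->
  forall x : I -> E, oconv r x 0 -> oconv r (fun i => T (x i)) 0.

Definition riesz_subspace (S : E -> Prop) : Prop :=
  S 0 /\ (forall x y, S x -> S y -> S (x + y)) /\
  (forall (a : R) x, S x -> S (a *: x)) /\
  (forall x y, S x -> S y -> S (rmax x y)).

Definition dedekind_complete_in (S : E -> Prop) : Prop :=
  forall A : E -> Prop, (forall x, A x -> S x) -> (exists x, A x) ->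
  (exists u, S u /\ is_ub A u) ->
  exists s, S s /\ is_ub A s /\ (forall u, S u -> is_ub A u -> le s u).

Definition range (T : E -> E) (y : E) : Prop := exists x, y = T x.

Definition cond_exp_op (T : {linear E -> E}) : Prop :=
  (forall x, le 0 x -> le 0 (T x)) /\
  order_continuous T /\
  (forall x, T (T x) = T x) /\
  (forall w, weak_order_unit w -> weak_order_unit (T w)) /\
  riesz_subspace (range T) /\ dedekind_complete_in (range T).

Definition tu_set (T : E -> E) (e : E) (L : Type) (f : L -> E) (c : R) : E -> Prop :=
  fun z => exists a, z = T (band_proj (rpos (rabs (f a) - c *: e)) (rabs (f a))).

Definition T_uniform (T : E -> E) (e : E) (L : Type) (f : L -> E) : Prop :=
  exists c0 : R,
    (forall c, c0 <= c -> exists s, is_lub (tu_set T e f c) s) /\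
    oconv (fun a b : R => a <= b) (fun c => lsup (tu_set T e f c)) 0.

Definition order_bounded (A : E -> Prop) : Prop :=
  exists a b, forall x, A x -> le a x /\ le x b.

End Riesz.

(* Main.v *)
Require Import Defs.
From mathcomp Require Import all_boot all_order all_algebra.
From mathcomp Require Import reals.
From Stdlib Require Import ClassicalEpsilon.
Set Implicit Arguments. Unset Strict Implicit. Unset Printing Implicit Defensive.
Import Order.TTheory GRing.Theory Num.Theory.
Local Open Scope ring_scope.

Section Aux.
Variables (R : realType) (E : lmodType R) (le : E -> E -> Prop).
Hypothesis hE : riesz_space le.

Let refl x : le x x := rs_refl hE x.
Let trans x y z : le x y -> le y z -> le x z := @rs_trans _ _ _ hE x y z.
Let anti x y : le x y -> le y x -> x = y := @rs_anti _ _ _ hE x y.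

Lemma addl x y z : le x y -> le (z + x) (z + y).
Proof. by move=> h; rewrite ![z + _]addrC; apply: rs_add. Qed.

Lemma add2 a b c d : le a b -> le c d -> le (a + c) (b + d).
Proof.
move=> h1 h2; apply: (trans (y := b + c)); first exact: rs_add.
exact: addl.
Qed.

Lemma addr_canc x y z : le (x + z) (y + z) -> le x y.
Proof. by move=> h; have := rs_add hE (- z) h; rewrite !addrK. Qed.

Lemma sub_ge0 x y : le x y -> le 0 (y - x).
Proof. by move=> h; have := rs_add hE (- x) h; rewrite subrr. Qed.

Lemma ge0_sub x y : le 0 (y - x) -> le x y.
Proof. by move=> h; have := rs_add hE x h; rewrite add0r subrK. Qed.

Lemma le_opp x y : le x y -> le (- y) (- x).
Proof.
move=> h; have := rs_add hE (- x - y) h.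
have -> : x + (- x - y) = - y by rewrite addrA subrr add0r.
by have -> : y + (- x - y) = - x by rewrite addrC addrNK.
Qed.

Lemma le_subl x y z : le (x + z) y -> le x (y - z).
Proof. by move=> h; have := rs_add hE (- z) h; rewrite addrK. Qed.

Lemma le_subr x y z : le x (y - z) -> le (x + z) y.
Proof. by move=> h; have := rs_add hE z h; rewrite subrK. Qed.

Lemma le_subl2 x y z : le x (y + z) -> le (x - z) y.
Proof. by move=> h; have := rs_add hE (- z) h; rewrite addrK. Qed.

Definition P2 (x y : E) := fun z => z = x \/ z = y.

Lemma lub2P x y m : is_lub le (P2 x y) m <->
  [/\ le x m, le y m & forall z, le x z -> le y z -> le m z].
Proof.
split.
  case=> hub hl; split; try by apply: hub; rewrite /P2; auto.
  by move=> z h1 h2; apply: hl => w [->|->].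
case=> h1 h2 h3; split; first by move=> w [->|->].
by move=> u hu; apply: h3; apply: hu; rewrite /P2; auto.
Qed.

Lemma glb2P x y m : is_glb le (P2 x y) m <->
  [/\ le m x, le m y & forall z, le z x -> le z y -> le z m].
Proof.
split.
  case=> hub hl; split; try by apply: hub; rewrite /P2; auto.
  by move=> z h1 h2; apply: hl => w [->|->].
case=> h1 h2 h3; split; first by move=> w [->|->].
by move=> u hu; apply: h3; apply: hu; rewrite /P2; auto.
Qed.

Lemma rmax_spec x y : is_lub le (P2 x y) (rmax le x y).
Proof. by rewrite /rmax /lsup; apply: epsilon_spec; apply: rs_sup2. Qed.

Lemma rmax_ge_l x y : le x (rmax le x y).
Proof. by case/lub2P: (rmax_spec x y). Qed.
Lemma rmax_ge_r x y : le y (rmax le x y).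
Proof. by case/lub2P: (rmax_spec x y). Qed.
Lemma rmax_least x y z : le x z -> le y z -> le (rmax le x y) z.
Proof. by case/lub2P: (rmax_spec x y) => _ _; apply. Qed.

Lemma rmax_eq x y m : le x m -> le y m ->
  (forall z, le x z -> le y z -> le m z) -> rmax le x y = m.
Proof.
move=> h1 h2 h3; apply: anti; first exact: rmax_least.
by apply: h3; [apply: rmax_ge_l|apply: rmax_ge_r].
Qed.

Lemma glb2_ex x y : exists m, is_glb le (P2 x y) m.
Proof.
exists (- rmax le (- x) (- y)); apply/glb2P; split.
- by rewrite -[x]opprK; apply: le_opp; rewrite opprK; apply: rmax_ge_l.
- by rewrite -[y]opprK; apply: le_opp; rewrite opprK; apply: rmax_ge_r.
- move=> z h1 h2; rewrite -[z]opprK; apply: le_opp.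
  by apply: rmax_least; apply: le_opp.
Qed.

Lemma rmin_spec x y : is_glb le (P2 x y) (rmin le x y).
Proof. by rewrite /rmin /linf; apply: epsilon_spec; apply: glb2_ex. Qed.

Lemma rmin_le_l x y : le (rmin le x y) x.
Proof. by case/glb2P: (rmin_spec x y). Qed.
Lemma rmin_le_r x y : le (rmin le x y) y.
Proof. by case/glb2P: (rmin_spec x y). Qed.
Lemma rmin_great x y z : le z x -> le z y -> le z (rmin le x y).
Proof. by case/glb2P: (rmin_spec x y) => _ _; apply. Qed.

Lemma rmin_eq x y m : le m x -> le m y ->
  (forall z, le z x -> le z y -> le z m) -> rmin le x y = m.
Proof.
move=> h1 h2 h3; apply: anti; last exact: rmin_great.
by apply: h3; [apply: rmin_le_l|apply: rmin_le_r].
Qed.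

Lemma rmax_sym x y : rmax le x y = rmax le y x.
Proof.
apply: rmax_eq; [apply: rmax_ge_r|apply: rmax_ge_l|].
by move=> z h1 h2; apply: rmax_least.
Qed.

Lemma rmin_sym x y : rmin le x y = rmin le y x.
Proof.
apply: rmin_eq; [apply: rmin_le_r|apply: rmin_le_l|].
by move=> z h1 h2; apply: rmin_great.
Qed.

Lemma rmin_max a b : rmin le a b = a + b - rmax le a b.
Proof.
apply: rmin_eq.
- apply: le_subl2; apply: addl; apply: rmax_ge_r.
- apply: le_subl2; rewrite addrC; apply: addl; apply: rmax_ge_l.
- move=> z h1 h2; apply: le_subl; rewrite addrC; apply: le_subr.
  apply: rmax_least.
  + rewrite -addrA -[X in le X _]addr0; apply: addl; exact: sub_ge0.
  + rewrite [a + b]addrC -addrA -[X in le X _]addr0; apply: addl; exact: sub_ge0.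
Qed.

Lemma abs_ge x : le x (rabs le x). Proof. exact: rmax_ge_l. Qed.
Lemma abs_geN x : le (- x) (rabs le x). Proof. exact: rmax_ge_r. Qed.

Lemma opp_le0 x : le 0 x -> le (- x) 0.
Proof. by move=> h; rewrite -oppr0; apply: le_opp. Qed.

Lemma abs_id x : le 0 x -> rabs le x = x.
Proof.
move=> h; apply: rmax_eq; first exact: refl.
  exact: trans (opp_le0 h) h.
by [].
Qed.

Lemma abs_ge0 x : le 0 (rabs le x).
Proof.
set m := rabs le x.
have h : le 0 (m + m).
  by have := add2 (abs_ge x) (abs_geN x); rewrite subrr.
have h2 : (0 : R) <= 2^-1 by rewrite invr_ge0 ler0n.
have := rs_scale hE h2 h.
rewrite scaler0 scalerDr -scalerDl.
have -> : (2^-1 + 2^-1 : R) = 1 by rewrite [1 in RHS]splitr mul1r.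
by rewrite scale1r.
Qed.

Lemma rpos_ge x : le x (rpos le x). Proof. exact: rmax_ge_l. Qed.
Lemma rpos_ge0 x : le 0 (rpos le x). Proof. exact: rmax_ge_r. Qed.
Lemma rpos_mono x y : le x y -> le (rpos le x) (rpos le y).
Proof.
move=> h; apply: rmax_least; last exact: rpos_ge0.
exact: trans h (rpos_ge y).
Qed.
Lemma rpos_le_abs x : le (rpos le x) (rabs le x).
Proof. apply: rmax_least; [exact: abs_ge|exact: abs_ge0]. Qed.

Lemma min_ge0 a b : le 0 a -> le 0 b -> le 0 (rmin le a b).
Proof. by move=> ha hb; apply: rmin_great. Qed.

Lemma min_subadd a b c : le 0 a -> le 0 b -> le 0 c ->
  le (rmin le a (b + c)) (rmin le a b + rmin le a c).
Proof.
move=> ha hb hc.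
have key : forall b c, le 0 c -> le (rmin le a (b + c)) (rmin le a b + c).
  move=> b' c' hc'; set m := rmin le a (b' + c').
  have h : le (m - c') (rmin le a b').
    apply: rmin_great; last by apply: le_subl2; apply: rmin_le_r.
    apply: (trans (y := m)); last exact: rmin_le_l.
    apply: le_subl2; rewrite -[X in le X _]addr0; exact: addl.
  by have := rs_add hE c' h; rewrite subrK.
apply: (trans (y := rmin le a (c + rmin le a b))).
  apply: rmin_great; first exact: rmin_le_l.
  by rewrite [X in le _ X]addrC; apply: key.
by rewrite [X in le _ X]addrC; apply: key; apply: min_ge0.
Qed.

Lemma bp_exists (hDC : dedekind_complete le) g u : le 0 g -> le 0 u ->
  exists p, band_gen le u p /\ disj_comp le u (g - p).
Proof.
move=> hg hu.
pose B n := rmin le g (u *+ n).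
pose A := fun z => exists n, z = B n.
have hun : forall n, le 0 (u *+ n).
  elim=> [|n IH]; first by rewrite mulr0n; exact: refl.
  by rewrite mulrSr; have := add2 IH hu; rewrite addr0.
have hB0 : forall n, le 0 (B n) by move=> n; apply: min_ge0.
have [s hs] : exists s, is_lub le A s.
  apply: hDC; first by exists (B 0%N), 0%N.
  by exists g => z [n ->]; exact: rmin_le_l.
case: hs => hub hl.
have hBs : forall n, le (B n) s by move=> n; apply: hub; exists n.
have hs0 : le 0 s := trans (hB0 0%N) (hBs 0%N).
have hsg : le s g by apply: hl => z [n ->]; exact: rmin_le_l.
exists s; split.
- move=> y; rewrite /disj_comp /Defs.disjoint (abs_id hu) => hy.
  move: hy; set a := rabs le y => hy.
  have ha : le 0 a := abs_ge0 y.
  rewrite (abs_id hs0) rmin_sym.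
  have hnu : forall n, rmin le a (u *+ n) = 0.
    elim=> [|n IH].
      apply: anti; last exact: min_ge0 ha (hun 0%N).
      rewrite mulr0n; exact: rmin_le_r.
    apply: anti; last exact: min_ge0 ha (hun _).
    by rewrite mulrSr; have := min_subadd ha (hun n) hu; rewrite IH hy addr0.
  have haB : forall n, rmin le a (B n) = 0.
    move=> n; apply: anti; last exact: min_ge0.
    rewrite -(hnu n); apply: rmin_great; first exact: rmin_le_l.
    exact: trans (rmin_le_r _ _) (rmin_le_r _ _).
  have hmax : forall b, le 0 b -> rmin le a b = 0 -> rmax le a b = a + b.
    move=> b hb h0; have := rmin_max a b; rewrite h0 => /esym/eqP.
    by rewrite subr_eq0 => /eqP ->.
  have h1 : forall n, le (B n) (rmax le a s - a).
    move=> n; apply: le_subl; rewrite addrC -(hmax _ (hB0 n) (haB n)).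
    apply: rmax_least; first exact: rmax_ge_l.
    exact: trans (hBs n) (rmax_ge_r _ _).
  have h2 : le (a + s) (rmax le a s).
    have : le s (rmax le a s - a) by apply: hl => z [n ->]; exact: h1.
    by move=> h; rewrite [a + s]addrC; exact: le_subr h.
  apply: anti; last exact: min_ge0.
  rewrite rmin_max; apply: le_subl2; rewrite add0r; exact: h2.
- rewrite /disj_comp /Defs.disjoint (abs_id hu) (abs_id (sub_ge0 hsg)).
  set w := rmin le (g - s) u.
  have hw : le 0 w by apply: min_ge0 (sub_ge0 hsg) hu.
  have hstep : forall n, le (B n + w) (B n.+1).
    move=> n; apply: rmin_great.
    - by have := add2 (hBs n) (rmin_le_l (g - s) u); rewrite subrKC.
    - rewrite mulrSr; apply: add2; exact: rmin_le_r.
  have h : le s (s - w).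
    by apply: hl => z [n ->]; apply: le_subl; exact: trans (hstep n) (hBs _).
  apply: anti => //.
  have := rs_add hE (w - s) h; rewrite subrKC addrA subrK subrr; done.
Qed.

Lemma bp_bound g k p : le 0 g -> le 0 k ->
  band_gen le (rpos le (g - k)) p -> disj_comp le (rpos le (g - k)) (g - p) ->
  le (g - p) k.
Proof.
move=> hg hk hb hd.
have hpq : rmin le (rabs le p) (rabs le (g - p)) = 0 := hb _ hd.
move: hd; rewrite /disj_comp /Defs.disjoint => hd.
have hp : le 0 p.
  have h1 : le (rpos le (- p)) (rmin le (rabs le p) (rabs le (g - p))).
    apply: rmin_great.
    - apply: rmax_least; [exact: abs_geN | exact: abs_ge0].
    - apply: trans (rpos_le_abs (g - p)); apply: rpos_mono.
      rewrite -[X in le X _]add0r; exact: rs_add.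
  rewrite hpq in h1.
  by have := le_opp (trans (rpos_ge (- p)) h1); rewrite opprK oppr0.
have hz : le (rpos le (g - p - k)) 0.
  rewrite -hd; apply: rmin_great.
  - apply: trans (rpos_le_abs (g - p)); apply: rpos_mono; apply: le_subl2.
    rewrite -[X in le X _]addr0; exact: addl.
  - apply: trans (abs_ge _); apply: rpos_mono; apply: (rs_add hE).
    apply: le_subl2; rewrite -[X in le X _]addr0; exact: addl.
by have := rs_add hE k (trans (rpos_ge _) hz); rewrite subrK add0r.
Qed.

End Aux.

Theorem lemma2p7 (R : realType) (E : lmodType R) (le : E -> E -> Prop)
  (hE : riesz_space le) (hDC : dedekind_complete le)
  (T : {linear E -> E}) (hT : cond_exp_op le T)
  (e : E) (he : weak_order_unit le e) (hTe : T e = e)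
  (L : Type) (f : L -> E) (hf : T_uniform le T e f) :
  order_bounded le (fun z => exists a, z = T (rabs le (f a))).
Proof.
case: hf => c0 [hlub _].
case: hT => hpos _.
set c := Num.max c0 0.
have hc0 : c0 <= c by rewrite /c le_max lexx.
have [s [hsub _]] := hlub c hc0.
have hc : (0 : R) <= c by rewrite le_max lexx orbT.
have hce : le 0 (c *: e).
  by have := rs_scale hE hc he.1; rewrite scaler0.
have Tmono : forall x y, le x y -> le (T x) (T y).
  move=> x y h; apply: (ge0_sub hE); rewrite -linearB; apply: hpos.
  exact: sub_ge0.
exists 0, (s + c *: e) => z [a ->]; split.
  by rewrite -(linear0 T); apply: Tmono; exact: abs_ge0.
set g := rabs le (f a).
set u := rpos le (g - c *: e).
have [hb hd] : band_gen le u (band_proj le u g) /\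
    disj_comp le u (g - band_proj le u g).
  apply: (epsilon_spec (inhabits 0) (fun p => band_gen le u p /\ disj_comp le u (g - p))).
  apply: bp_exists => //; [exact: abs_ge0 | exact: rpos_ge0].
rewrite (_ : g = band_proj le u g + (g - band_proj le u g)); last by rewrite subrKC.
rewrite linearD; apply: (add2 hE).
  by apply: (hsub (T (band_proj le u g))); exists a.
have -> : c *: e = T (c *: e) by rewrite linearZ hTe.
apply: Tmono; apply: (bp_bound hE); last exact: hd.
- exact: (abs_ge0 hE).
- exact: hce.
- exact: hb.
Qed.
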